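(* Consider the following model (an ''ideal sensory unit''). The input is a stimulus $\mu(t)$, and the state is a positive real number $m(t)>0$ (a continuous approximation of the sample size), evolving by $$\dot m(t) = g\big(m(t), m_{eq}(\mu(t))\big),$$ where: (i) $\sigma_R^2>0$ is a constant; (ii) $\sigma^2(\mu)$ and $m_{eq}(\mu)>0$ are continuous, non-decreasing functions of $\mu$; (iii) $g(m,m_{eq})=0$ if and only if $m=m_{eq}$, and $m$ tracks $m_{eq}$ monotonically, i.e. $g(m,m_{eq})$ has the sign of $m_{eq}-m$. The uncertainty is $$H(\mu,m)=\tfrac12\log\!\Big(\sigma_R^2+\frac{\sigma^2(\mu)}{m}\Big)+\text{constant}.$$ The sensory information is the differential form $$d\mathscr{I} = -\frac{\partial H}{\partial m}(\mu,m)\,dm = \frac{\sigma^2(\mu)}{2m\,\big(m\sigma_R^2+\sigma^2(\mu)\big)}\,dm,$$ which is the negative of the relaxation component $\frac{\partial H}{\partial m}\,dm$ in the decomposition $dH=\frac{\partial H}{\partial\mu}d\mu+\frac{\partial H}{\partial m}dm$. Let $\mu(t)$, $t\in[0,T]$, be a cyclic stimulus that generates a trajectory $t\mapsto(\mu(t),m(t))$ forming a closed curve $C$ in $(\mu,m)$ state space. Then $$\oint_C d\mathscr{I} = \int_0^T \frac{\sigma^2(\mu(t))}{2m(t)\big(m(t)\sigma_R^2+\sigma^2(\mu(t))\big)}\,\dot m(t)\,dt \;\ge\; 0 .$$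
   Context: In this model, $\mu$ is the stimulus intensity and $m$ is the number of samples taken of a noisy stimulus with variance $\sigma^2(\mu)$. The constant $\sigma_R^2$ is a representational-noise variance, and $m_{eq}(\mu)$ is the equilibrium sample size for input $\mu$. The firing-rate output is $F=kH$ for a constant $k>0$; this relation is not needed for the statement. ''Cyclic'' means the stimulus returns to its initial value and the state trajectory closes up, i.e. $(\mu(T),m(T))=(\mu(0),m(0))$. *)

(* Defs.v *)
From Stdlib Require Import Reals.
From Coquelicot Require Import Coquelicot.
Open Scope R_scope.

Definition uncertainty (sR2 : R) (sigma2 : R -> R) (mu m : R) : R :=
  / 2 * ln (sR2 + sigma2 mu / m).

(* Coefficient of dm in the sensory-information form dI = -(dH/dm) dm. *)
Definition info_coef (sR2 : R) (sigma2 : R -> R) (mu m : R) : R :=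
  sigma2 mu / (2 * m * (m * sR2 + sigma2 mu)).

Definition tracks_monotonically (g : R -> R -> R) : Prop :=
  forall m meq, 0 < m -> 0 < meq ->
    (g m meq = 0 <-> m = meq) /\
    (0 < g m meq <-> m < meq) /\
    (g m meq < 0 <-> meq < m).

(* Main.v *)
Require Import Defs.
From Stdlib Require Import Reals Lra List.
From Coquelicot Require Import Coquelicot.
Open Scope R_scope.

Lemma lub_props (E : R -> Prop) r0 K : E r0 -> (forall r, E r -> r <= K) ->
  (forall r, E r -> r <= real (Lub_Rbar E)) /\
  (forall b, (forall r, E r -> r <= b) -> real (Lub_Rbar E) <= b).
Proof.
  intros H0 HK. destruct (Lub_Rbar_correct E) as [ub lub].
  destruct (Lub_Rbar E) as [l| |] eqn:El; simpl.
  - split. intros r Hr. exact (ub r Hr). intros b Hb. apply (lub (Finite b)). intros x Hx. exact (Hb x Hx).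
  - exfalso. specialize (lub (Finite K)). simpl in lub. apply lub. intros x Hx. exact (HK x Hx).
  - exfalso. specialize (ub r0 H0). simpl in ub. exact ub.
Qed.

Lemma glb_props (E : R -> Prop) r0 K : E r0 -> (forall r, E r -> K <= r) ->
  (forall r, E r -> real (Glb_Rbar E) <= r) /\
  (forall b, (forall r, E r -> b <= r) -> b <= real (Glb_Rbar E)).
Proof.
  intros H0 HK. destruct (Glb_Rbar_correct E) as [lb glb].
  destruct (Glb_Rbar E) as [l| |] eqn:El; simpl.
  - split. intros r Hr. exact (lb r Hr). intros b Hb. apply (glb (Finite b)). intros x Hx. exact (Hb x Hx).
  - exfalso. specialize (lb r0 H0). simpl in lb. exact lb.
  - exfalso. specialize (glb (Finite K)). simpl in glb. apply glb. intros x Hx. exact (HK x Hx).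
Qed.

Definition Lw (w x y : R) := ln (y + w) - ln (x + w).

Lemma Lw_ge0 w x y : 0 < x -> 0 <= w -> x <= y -> 0 <= Lw w x y.
Proof.
  intros. unfold Lw. assert (ln (x+w) <= ln (y+w)) by (apply ln_le; lra). lra.
Qed.

Lemma Lw_mono h w x y : 0 < x -> x <= y -> 0 <= h -> h <= w -> Lw w x y <= Lw h x y.
Proof.
  intros. unfold Lw.
  assert (ln ((y+w)*(x+h)) <= ln ((y+h)*(x+w))).
  { apply ln_le. apply Rmult_lt_0_compat; lra. nra. }
  rewrite !ln_mult in H3 by lra. lra.
Qed.

Lemma Lw_add w x y z : Lw w x y + Lw w y z = Lw w x z.
Proof. unfold Lw. ring. Qed.

Fixpoint ch (z : R) (l : list R) : Prop :=
  match l with nil => True | z' :: l' => z <= z' /\ ch z' l' end.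
Fixpoint csum (h : R -> R) (z : R) (l : list R) : R :=
  match l with nil => 0 | z' :: l' => Lw (h z) z z' + csum h z' l' end.
Fixpoint lst (z : R) (l : list R) : R :=
  match l with nil => z | z' :: l' => lst z' l' end.


Lemma ch_le l : forall z, ch z l -> z <= lst z l.
Proof. induction l as [|z' l IH]; simpl; intros z H. lra. destruct H. specialize (IH z' H0). lra. Qed.

Lemma csum_ge0 (h : R -> R) (Hh : forall x, 0 <= h x) l : forall z, 0 < z -> ch z l -> 0 <= csum h z l.
Proof.
  induction l as [|z' l IH]; simpl; intros z Hz H. lra. destruct H.
  assert (0 <= Lw (h z) z z') by (apply Lw_ge0; auto). specialize (IH z' ltac:(lra) H0). lra.
Qed.

Lemma csum_low (h : R -> R) (Hh : forall x, 0 <= h x) (Hm : forall x y, x <= y -> h x <= h y) w l :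
  forall z, 0 < z -> ch z l -> h (lst z l) <= w -> Lw w z (lst z l) <= csum h z l.
Proof.
  induction l as [|z' l IH]; simpl; intros z Hz H Hw. unfold Lw; lra. destruct H as [H1 H2].
  specialize (IH z' ltac:(lra) H2 Hw).
  assert (Lw w z z' <= Lw (h z) z z').
  { apply Lw_mono; auto. assert (h z <= h (lst z' l)). apply Hm. pose proof (ch_le l z' H2). lra. lra. }
  rewrite <- (Lw_add w z z'). lra.
Qed.

Lemma csum_split (h : R -> R) (Hh : forall x, 0 <= h x) (Hm : forall x y, x <= y -> h x <= h y) w x l :
  forall z, 0 < z -> ch z l -> z <= x -> x <= lst z l -> h (lst z l) <= w ->
  exists l1, ch z l1 /\ lst z l1 = x /\ csum h z l1 + Lw w x (lst z l) <= csum h z l.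
Proof.
  induction l as [|z' l IH]; simpl; intros z Hz H Hzx Hxl Hw.
  - exists nil. simpl. split; auto. split. lra. unfold Lw. replace x with z by lra. lra.
  - destruct H as [H1 H2]. pose proof (ch_le l z' H2).
    destruct (Rle_dec x z') as [Hxz|Hxz].
    + exists (x :: nil). simpl. split. split; [lra|exact I]. split; [reflexivity|].
      pose proof (csum_low h Hh Hm w l z' ltac:(lra) H2 Hw).
      assert (Lw w x z' <= Lw (h z) x z').
      { apply Lw_mono; try lra; auto. assert (h z <= h (lst z' l)) by (apply Hm; lra). lra. }
      assert (Lw (h z) z z' = Lw (h z) z x + Lw (h z) x z') by (rewrite Lw_add; auto).
      rewrite <- (Lw_add w x z' (lst z' l)). lra.
    + destruct (IH z' ltac:(lra) H2 ltac:(lra) Hxl Hw) as [l1 [Hc [Hl Hs]]].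
      exists (z' :: l1). simpl. split. split; auto. split; auto. lra.
Qed.

Lemma ch_app l : forall z y, ch z l -> lst z l <= y -> ch z (l ++ y :: nil).
Proof. induction l as [|z' l IH]; simpl; intros. split; auto. destruct H. split; auto. Qed.
Lemma lst_app l : forall z y, lst z (l ++ y :: nil) = y.
Proof. induction l as [|z' l IH]; simpl; intros; auto. Qed.
Lemma csum_app h l : forall z y, csum h z (l ++ y :: nil) = csum h z l + Lw (h (lst z l)) (lst z l) y.
Proof. induction l as [|z' l IH]; simpl; intros. ring. rewrite IH. ring. Qed.

Definition Uset h a y := fun c => exists l, ch a l /\ lst a l = y /\ c = csum h a l.
Definition Uf h a y := real (Glb_Rbar (Uset h a y)).

Lemma Uf_props h a y (Hh : forall x, 0 <= h x) : 0 < a -> a <= y ->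
  (forall l, ch a l -> lst a l = y -> Uf h a y <= csum h a l) /\
  (forall b, (forall l, ch a l -> lst a l = y -> b <= csum h a l) -> b <= Uf h a y).
Proof.
  intros Ha Hy.
  destruct (glb_props (Uset h a y) (csum h a (y :: nil)) 0) as [P1 P2].
  - exists (y :: nil). simpl. auto.
  - intros r [l [H1 [H2 H3]]]. subst. apply csum_ge0; auto.
  - split.
    + intros l H1 H2. apply P1. exists l. auto.
    + intros b Hb. apply P2. intros r [l [H1 [H2 H3]]]. subst. auto.
Qed.

Lemma Uf_B h a x y (Hh : forall x, 0 <= h x) : 0 < a -> a <= x -> x <= y ->
  Uf h a y <= Uf h a x + Lw (h x) x y.
Proof.
  intros Ha Hx Hxy.
  destruct (Uf_props h a y Hh Ha ltac:(lra)) as [Py1 _].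
  destruct (Uf_props h a x Hh Ha Hx) as [_ Px2].
  assert (Uf h a y - Lw (h x) x y <= Uf h a x); [|lra].
  apply Px2. intros l H1 H2.
  specialize (Py1 (l ++ y :: nil) (ch_app l a y H1 ltac:(lra)) (lst_app l a y)).
  rewrite csum_app, H2 in Py1. lra.
Qed.

Lemma Uf_A h a x y w (Hh : forall x, 0 <= h x) (Hm : forall x y, x <= y -> h x <= h y) :
  0 < a -> a <= x -> x <= y -> h y <= w ->
  Uf h a x + Lw w x y <= Uf h a y.
Proof.
  intros Ha Hx Hxy Hw.
  destruct (Uf_props h a y Hh Ha ltac:(lra)) as [_ Py2].
  destruct (Uf_props h a x Hh Ha Hx) as [Px1 _].
  apply Py2. intros l H1 H2.
  destruct (csum_split h Hh Hm w x l a Ha H1 Hx ltac:(lra) ltac:(rewrite H2; lra)) as [l1 [Hc [Hl Hs]]].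
  rewrite H2 in Hs. specialize (Px1 l1 Hc Hl). lra.
Qed.

Lemma cont_ind (G : R -> R) T eps : 0 <= T ->
  (forall t, 0 <= t <= T -> exists d, 0 < d /\ forall p q, 0 <= p -> p < q -> q <= T ->
      Rabs (p - t) < d -> Rabs (q - t) < d -> - eps * (q - p) <= G q - G p) ->
  - eps * T <= G T - G 0.
Proof.
  intros HT Hloc.
  set (S := fun x => 0 <= x <= T /\ forall s, 0 <= s <= x -> - eps * s <= G s - G 0).
  assert (HS0 : S 0).
  { split. lra. intros s Hs. replace s with 0 by lra. lra. }
  assert (Hb : bound S). { exists T. intros x [Hx _]. lra. }
  destruct (completeness S Hb (ex_intro _ 0 HS0)) as [c [Hub Hlub]].
  assert (Hc0 : 0 <= c) by (apply Hub; auto).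
  assert (HcT : c <= T) by (apply Hlub; intros x [Hx _]; lra).
  assert (Hbelow : forall s, 0 <= s < c -> - eps * s <= G s - G 0).
  { intros s Hs. destruct (Rle_dec c s) as [Hcs|Hcs]. lra.
    assert (exists x, S x /\ s < x) as [x [[_ Hx] Hsx]].
    { apply Classical_Prop.NNPP. intro Hn. assert (c <= s). apply Hlub. intros y Hy.
      destruct (Rle_dec y s). auto. exfalso. apply Hn. exists y. split; auto. lra. lra. }
    apply Hx. lra. }
  destruct (Hloc c ltac:(lra)) as [d [Hd Hdl]].
  assert (HSc : S c).
  { split. lra. intros s Hs. destruct (Rle_dec c s) as [Hcs|Hcs].
    - replace s with c by lra. destruct (Req_dec c 0) as [Hc|Hc].
      + rewrite Hc. lra.
      + set (p := Rmax 0 (c - d/2)).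
        assert (0 <= p /\ p < c /\ c - d/2 <= p) as [Hp1 [Hp2 Hp3]].
        { unfold p. unfold Rmax. destruct (Rle_dec 0 (c - d/2)); lra. }
        assert (- eps * (c - p) <= G c - G p).
        { apply Hdl; try lra. rewrite Rabs_left1 by lra. lra. rewrite (Rminus_diag_eq c c eq_refl), Rabs_R0. lra. }
        assert (- eps * p <= G p - G 0) by (apply Hbelow; lra). lra.
    - apply Hbelow. lra. }
  destruct (Rle_dec T c) as [HTc|HTc].
  - replace T with c by lra. destruct HSc as [_ H]. apply H. lra.
  - exfalso. set (q := Rmin T (c + d/2)).
    assert (c < q /\ q <= T /\ q <= c + d/2) as [Hq1 [Hq2 Hq3]].
    { unfold q, Rmin. destruct (Rle_dec T (c + d/2)); lra. }
    assert (S q).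
    { split. lra. intros s Hs. destruct (Rle_dec s c) as [Hsc|Hsc].
      - destruct HSc as [_ H]. apply H. lra.
      - assert (- eps * (s - c) <= G s - G c).
        { apply Hdl; try lra. rewrite (Rminus_diag_eq c c eq_refl), Rabs_R0. lra. rewrite Rabs_right by lra. lra. }
        destruct HSc as [_ H9]. specialize (H9 c ltac:(lra)). lra. }
    assert (q <= c) by (apply Hub; auto). lra.
Qed.

Lemma cont_eps (f : R -> R) x : continuous f x ->
  forall eps, 0 < eps -> exists d, 0 < d /\ forall y, Rabs (y - x) < d -> Rabs (f y - f x) < eps.
Proof.
  intros H eps He. apply continuity_pt_filterlim in H.
  unfold continuity_pt, continue_in, limit1_in, limit_in in H.
  destruct (H eps He) as [d [Hd Hf]]. exists d. split; auto. intros y Hy.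
  destruct (Req_dec y x) as [->|Hne].
  - rewrite (Rminus_diag_eq (f x) (f x) eq_refl), Rabs_R0. auto.
  - apply (Hf y). split. split. exact I. auto. exact Hy.
Qed.

Lemma cont_div (f g : R -> R) x : continuous f x -> continuous g x -> g x <> 0 ->
  continuous (fun r => f r / g r) x.
Proof.
  intros. unfold Rdiv. apply (continuous_mult f (fun r => / g r)); auto.
  apply continuous_Rinv_comp; auto.
Qed.

Lemma cont_plus (f g : R -> R) x : continuous f x -> continuous g x ->
  continuous (fun r => f r + g r) x.
Proof. intros. apply (continuous_plus f g); auto. Qed.

Lemma ftc_ln (m D : R -> R) w p q : 0 <= w -> p <= q ->
  (forall r, p <= r <= q -> is_derive m r (D r)) ->
  (forall r, p <= r <= q -> continuous D r) ->
  (forall r, p <= r <= q -> 0 < m r) ->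
  RInt (fun r => D r / (m r + w)) p q = ln (m q + w) - ln (m p + w).
Proof.
  intros Hw Hpq Hd Hc Hm. apply is_RInt_unique.
  apply (is_RInt_derive (fun r => ln (m r + w))).
  - rewrite Rmin_left, Rmax_right by lra. intros r Hr.
    assert (H1 := is_derive_plus m (fun _ => w) r (D r) zero (Hd r Hr) (is_derive_const w r)).
    rewrite plus_zero_r in H1.
    assert (H2 := is_derive_comp ln (fun r => plus (m r) w) r _ _ (is_derive_ln (m r + w) ltac:(specialize (Hm r Hr); lra)) H1).
    exact H2.
  - rewrite Rmin_left, Rmax_right by lra. intros r Hr.
    apply cont_div. auto. apply cont_plus. apply (ex_derive_continuous (K:=R_AbsRing) (V:=R_NormedModule) m r). exists (D r). auto.
    apply continuous_const. specialize (Hm r Hr). lra.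
Qed.

Lemma ftc_m (m D : R -> R) p q : p <= q ->
  (forall r, p <= r <= q -> is_derive m r (D r)) ->
  (forall r, p <= r <= q -> continuous D r) ->
  RInt D p q = m q - m p.
Proof.
  intros Hpq Hd Hc. apply is_RInt_unique.
  apply (is_RInt_derive m).
  - rewrite Rmin_left, Rmax_right by lra. auto.
  - rewrite Rmin_left, Rmax_right by lra. auto.
Qed.

Lemma abs_div_le x y e a : 0 < a -> a <= y -> Rabs x <= e -> Rabs (x / y) <= e / a.
Proof.
  intros Ha Hy Hx. unfold Rdiv. rewrite Rabs_mult, Rabs_Rinv by lra.
  rewrite (Rabs_right y) by lra.
  apply Rmult_le_compat.
  - apply Rabs_pos.
  - left; apply Rinv_0_lt_compat; lra.
  - exact Hx.
  - apply Rinv_le_contravar; lra.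
Qed.

Lemma abs_psi_le d x u1 u2 a B c : 0 < a -> a <= x -> 0 <= u1 -> 0 <= u2 ->
  Rabs d <= B -> Rabs (u2 - u1) <= c ->
  Rabs (d / (x + u1) - d / (x + u2)) <= B * c / (a * a).
Proof.
  intros Ha Hx H1 H2 Hd Hc.
  replace (d / (x + u1) - d / (x + u2)) with ((d * (u2 - u1)) / ((x + u1) * (x + u2))) by (field; lra).
  apply abs_div_le. nra. nra. rewrite Rabs_mult.
  apply Rmult_le_compat; try apply Rabs_pos; auto.
Qed.
Definition Hset (T : R) (v e : R -> R) (x : R) : R -> Prop :=
  fun r => r = 0 \/ exists q, 0 <= q <= T /\ e q < x /\ r = v q.
Definition Hf T v e x := real (Lub_Rbar (Hset T v e x)).

Lemma Hf_props T v e K :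
  (forall t, 0 <= t <= T -> 0 <= v t <= K) ->
  (forall s t, 0 <= s <= T -> 0 <= t <= T -> e s < e t -> v s <= v t) ->
  (forall x, 0 <= Hf T v e x) /\
  (forall x y, x <= y -> Hf T v e x <= Hf T v e y) /\
  (forall t y, 0 <= t <= T -> y < e t -> Hf T v e y <= v t) /\
  (forall t y, 0 <= t <= T -> e t < y -> v t <= Hf T v e y).
Proof.
  intros Hv Hco.
  assert (P : forall x, (forall r, Hset T v e x r -> r <= Hf T v e x) /\
     (forall b, (forall r, Hset T v e x r -> r <= b) -> Hf T v e x <= b)).
  { intros x. apply (lub_props _ 0 (Rmax 0 K)). left; auto.
    intros r [->|[q [Hq [_ ->]]]]. apply Rmax_l. specialize (Hv q Hq).
    eapply Rle_trans. 2: apply Rmax_r. lra. }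
  split; [|split; [|split]].
  - intros x. apply (proj1 (P x)). left; auto.
  - intros x y Hxy. apply (proj2 (P x)). intros r Hr. apply (proj1 (P y)).
    destruct Hr as [->|[q [Hq [Hqe ->]]]]. left; auto. right. exists q. split; auto. split; auto. lra.
  - intros t y Ht Hy. apply (proj2 (P y)). intros r [->|[q [Hq [Hqe ->]]]].
    apply Hv; auto. apply Hco; auto. lra.
  - intros t y Ht Hy. apply (proj1 (P y)). right. exists t. auto.
Qed.

Lemma ball_in p q r t d : Rabs (p - t) < d -> Rabs (q - t) < d -> p <= r <= q -> Rabs (r - t) < d.
Proof.
  intros Hp Hq Hr. apply Rabs_def2 in Hp. apply Rabs_def2 in Hq. apply Rabs_def1; lra.
Qed.
Lemma local_step T (m D v e : R -> R) a K :
  0 <= T -> 0 < a ->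
  (forall t, 0 <= t <= T -> a <= m t) ->
  (forall t, 0 <= t <= T -> is_derive m t (D t)) ->
  (forall t, 0 <= t <= T -> continuous D t) ->
  (forall t, 0 <= t <= T -> continuous v t) ->
  (forall t, 0 <= t <= T -> 0 <= v t <= K) ->
  (forall t, 0 <= t <= T -> 0 < D t -> m t < e t) ->
  (forall t, 0 <= t <= T -> D t < 0 -> e t < m t) ->
  (forall s t, 0 <= s <= T -> 0 <= t <= T -> e s < e t -> v s <= v t) ->
  forall eps, 0 < eps -> forall t, 0 <= t <= T ->
  exists d, 0 < d /\ forall p q, 0 <= p -> p < q -> q <= T ->
    Rabs (p - t) < d -> Rabs (q - t) < d ->
    - eps * (q - p) <= Uf (Hf T v e) a (m q) - Uf (Hf T v e) a (m p)
                       - RInt (fun r => D r / (m r + v r)) p q.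
Proof.
  intros HT Ha Hma Hd HDc Hvc Hv Hpos Hneg Hco eps He t Ht.
  destruct (Hf_props T v e K Hv Hco) as [Hh0 [Hhm [Hh4 Hh5]]].
  set (h := Hf T v e).
  set (fJ := fun r => D r / (m r + v r)).
  assert (Hmc : forall r, 0 <= r <= T -> continuous m r).
  { intros r Hr. apply (ex_derive_continuous (K:=R_AbsRing) (V:=R_NormedModule) m r). exists (D r). auto. }
  assert (HexW : forall w p q, 0 <= w -> 0 <= p -> p <= q -> q <= T -> ex_RInt (fun r => D r / (m r + w)) p q).
  { intros w p q Hw Hp Hpq Hq. apply (ex_RInt_continuous (V:=R_CompleteNormedModule)). rewrite Rmin_left, Rmax_right by lra.
    intros z Hz. apply cont_div. apply HDc; lra. apply cont_plus. apply Hmc; lra. apply continuous_const.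
    specialize (Hma z ltac:(lra)). lra. }
  assert (HexJ : forall p q, 0 <= p -> p <= q -> q <= T -> ex_RInt fJ p q).
  { intros p q Hp Hpq Hq. apply (ex_RInt_continuous (V:=R_CompleteNormedModule)). rewrite Rmin_left, Rmax_right by lra.
    intros z Hz. apply cont_div. apply HDc; lra. apply cont_plus. apply Hmc; lra. apply Hvc; lra.
    specialize (Hma z ltac:(lra)). specialize (Hv z ltac:(lra)). lra. }
  assert (Hftc : forall w p q, 0 <= w -> 0 <= p -> p <= q -> q <= T ->
     RInt (fun r => D r / (m r + w)) p q = ln (m q + w) - ln (m p + w)).
  { intros w p q Hw Hp Hpq Hq. apply ftc_ln; auto. intros; apply Hd; lra. intros; apply HDc; lra.
    intros r Hr. specialize (Hma r ltac:(lra)). lra. }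
  assert (Hftcm : forall p q, 0 <= p -> p <= q -> q <= T -> RInt D p q = m q - m p).
  { intros p q Hp Hpq Hq. apply ftc_m; auto. intros; apply Hd; lra. intros; apply HDc; lra. }
  assert (HexD : forall p q, 0 <= p -> p <= q -> q <= T -> ex_RInt D p q).
  { intros p q Hp Hpq Hq. apply (ex_RInt_continuous (V:=R_CompleteNormedModule)). rewrite Rmin_left, Rmax_right by lra.
    intros z Hz. apply HDc; lra. }
  set (B := Rabs (D t) + 1).
  assert (HB : 0 < B) by (unfold B; pose proof (Rabs_pos (D t)); lra).
  set (c := eps * a * a / B).
  assert (Hc : 0 < c) by (unfold c; apply Rdiv_lt_0_compat; [repeat apply Rmult_lt_0_compat; lra | lra]).
  assert (Tail : forall p q, 0 <= p -> p < q -> q <= T ->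
     (forall r, p <= r <= q -> Rabs (D r) <= B /\ Rabs (v r - v t) <= c) ->
     RInt fJ p q <= RInt (fun r => D r / (m r + v t)) p q + eps * (q - p)).
  { intros p q Hp Hpq Hq Hr.
    assert (Hvt := Hv t Ht).
    assert (E : RInt (fun r => D r / (m r + v t) - fJ r) p q =
                RInt (fun r => D r / (m r + v t)) p q - RInt fJ p q).
    { apply (RInt_minus (fun r => D r / (m r + v t)) fJ). apply HexW; lra. apply HexJ; lra. }
    assert (Hab : Rabs (RInt (fun r => D r / (m r + v t) - fJ r) p q) <= (q - p) * eps).
    { apply abs_RInt_le_const. lra.
      apply (ex_RInt_minus (fun r => D r / (m r + v t)) fJ). apply HexW; lra. apply HexJ; lra.
      intros r Hr'. destruct (Hr r Hr') as [H1 H2]. unfold fJ.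
      replace eps with (B * c / (a * a)) by (unfold c; field; split; lra).
      destruct (Hv r ltac:(lra)). destruct Hvt.
      apply abs_psi_le; [lra| apply Hma; lra | lra | lra | exact H1 | exact H2]. }
    rewrite E in Hab. pose proof (Rabs_maj2 (RInt (fun r => D r / (m r + v t)) p q - RInt fJ p q)). lra. }
  assert (HBnd : forall r, Rabs (D r - D t) < 1 -> Rabs (D r) <= B).
  { intros r Hr. pose proof (Rabs_triang_inv (D r) (D t)). unfold B. lra. }
  destruct (Hv t Ht) as [Hvt0 HvtK].
  destruct (Rtotal_order (D t) 0) as [Hn|[Hz|Hp0]].
  -
    destruct (cont_eps D t (HDc t Ht) 1 ltac:(lra)) as [dB [HdB HB1]].
    destruct (cont_eps v t (Hvc t Ht) c Hc) as [dv [Hdv Hv1]].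
    destruct (cont_eps D t (HDc t Ht) (- D t) ltac:(lra)) as [d1 [Hd1 HD1]].
    assert (Hg := Hneg t Ht Hn).
    destruct (cont_eps m t (Hmc t Ht) (m t - e t) ltac:(lra)) as [d3 [Hd3 Hm3]].
    exists (Rmin (Rmin dB dv) (Rmin d1 d3)). split.
    { repeat apply Rmin_pos; auto. }
    intros p q Hp Hpq Hq Hpt Hqt.
    assert (Hin : forall r, p <= r <= q -> Rabs (r - t) < dB /\ Rabs (r - t) < dv /\ Rabs (r - t) < d1 /\ Rabs (r - t) < d3).
    { intros r Hr. pose proof (ball_in p q r t _ Hpt Hqt Hr).
      pose proof (Rmin_l (Rmin dB dv) (Rmin d1 d3)). pose proof (Rmin_r (Rmin dB dv) (Rmin d1 d3)).
      pose proof (Rmin_l dB dv). pose proof (Rmin_r dB dv). pose proof (Rmin_l d1 d3). pose proof (Rmin_r d1 d3).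
      lra. }
    assert (Htl : RInt fJ p q <= RInt (fun r => D r / (m r + v t)) p q + eps * (q - p)).
    { apply Tail; auto. intros r Hr. destruct (Hin r Hr) as [H1 [H2 _]]. split.
      apply HBnd; auto. left. apply Hv1; auto. }
    assert (HDn : forall r, p <= r <= q -> D r < 0).
    { intros r Hr. destruct (Hin r Hr) as [_ [_ [H3 _]]]. destruct (Rabs_def2 _ _ (HD1 r H3)) as [? ?]. lra. }
    assert (Hme : forall r, p <= r <= q -> e t < m r).
    { intros r Hr. destruct (Hin r Hr) as [_ [_ [_ H4]]]. destruct (Rabs_def2 _ _ (Hm3 r H4)) as [? ?]. lra. }
    assert (Hmono : m q <= m p).
    { assert (0 <= RInt (fun r => - D r) p q).
      { apply RInt_ge_0. lra. apply (ex_RInt_opp D). apply HexD; lra. intros r Hr. specialize (HDn r ltac:(lra)). lra. }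
      rewrite (RInt_opp D) in H by (apply HexD; lra). rewrite Hftcm in H by lra. unfold opp in H; simpl in H. lra. }
    assert (HU : Uf h a (m p) <= Uf h a (m q) + Lw (h (m q)) (m q) (m p)).
    { apply Uf_B; auto. apply Hma; lra. }
    assert (HL : Lw (h (m q)) (m q) (m p) <= Lw (v t) (m q) (m p)).
    { specialize (Hma q ltac:(lra)). apply Lw_mono; [lra | lra | lra | apply Hh5; auto; apply Hme; lra]. }
    rewrite (Hftc (v t) p q) in Htl by lra. unfold Lw in HL, HU. lra.
  -
    set (eta := eps * a / 2).
    assert (Heta : 0 < eta) by (unfold eta; apply Rdiv_lt_0_compat; [apply Rmult_lt_0_compat|]; lra).
    destruct (cont_eps D t (HDc t Ht) eta Heta) as [d1 [Hd1 HD1]].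
    exists d1. split; auto.
    intros p q Hp Hpq Hq Hpt Hqt.
    assert (HDs : forall r, p <= r <= q -> Rabs (D r) <= eta).
    { intros r Hr. specialize (HD1 r (ball_in p q r t _ Hpt Hqt Hr)). rewrite Hz, Rminus_0_r in HD1. lra. }
    assert (HI1 : Rabs (RInt (fun r => D r / (m r + 0)) p q) <= (q - p) * (eta / a)).
    { apply abs_RInt_le_const. lra. apply HexW; lra. intros r Hr. apply abs_div_le; auto.
      specialize (Hma r ltac:(lra)). lra. }
    assert (HI2 : Rabs (RInt fJ p q) <= (q - p) * (eta / a)).
    { apply abs_RInt_le_const. lra. apply HexJ; lra. intros r Hr. apply abs_div_le; auto.
      specialize (Hma r ltac:(lra)). specialize (Hv r ltac:(lra)). lra. }
    assert (HU : - Rabs (RInt (fun r => D r / (m r + 0)) p q) <= Uf h a (m q) - Uf h a (m p)).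
    { destruct (Rle_dec (m p) (m q)) as [Hle|Hlt].
      - assert (Uf h a (m p) + Lw (h (m q)) (m p) (m q) <= Uf h a (m q)).
        { apply Uf_A; auto. apply Hma; lra. lra. }
        assert (0 <= Lw (h (m q)) (m p) (m q)).
        { apply Lw_ge0; auto. specialize (Hma p ltac:(lra)). lra. }
        pose proof (Rabs_pos (RInt (fun r => D r / (m r + 0)) p q)). lra.
      - assert (Uf h a (m p) <= Uf h a (m q) + Lw (h (m q)) (m q) (m p)).
        { apply Uf_B; auto. apply Hma; lra. lra. }
        assert (Lw (h (m q)) (m q) (m p) <= Lw 0 (m q) (m p)).
        { specialize (Hma q ltac:(lra)). apply Lw_mono; [lra | lra | lra | apply Hh0]. }
        rewrite (Hftc 0 p q) by lra. unfold Lw in *.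
        pose proof (Rabs_maj2 (ln (m q + 0) - ln (m p + 0))). lra. }
    pose proof (Rle_abs (RInt fJ p q)).
    assert ((q - p) * (eta / a) = eps * (q - p) / 2) by (unfold eta; field; lra).
    lra.
  -
    destruct (cont_eps D t (HDc t Ht) 1 ltac:(lra)) as [dB [HdB HB1]].
    destruct (cont_eps v t (Hvc t Ht) c Hc) as [dv [Hdv Hv1]].
    destruct (cont_eps D t (HDc t Ht) (D t) ltac:(lra)) as [d1 [Hd1 HD1]].
    assert (Hg := Hpos t Ht Hp0).
    destruct (cont_eps m t (Hmc t Ht) (e t - m t) ltac:(lra)) as [d3 [Hd3 Hm3]].
    exists (Rmin (Rmin dB dv) (Rmin d1 d3)). split.
    { repeat apply Rmin_pos; auto. }
    intros p q Hp Hpq Hq Hpt Hqt.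
    assert (Hin : forall r, p <= r <= q -> Rabs (r - t) < dB /\ Rabs (r - t) < dv /\ Rabs (r - t) < d1 /\ Rabs (r - t) < d3).
    { intros r Hr. pose proof (ball_in p q r t _ Hpt Hqt Hr).
      pose proof (Rmin_l (Rmin dB dv) (Rmin d1 d3)). pose proof (Rmin_r (Rmin dB dv) (Rmin d1 d3)).
      pose proof (Rmin_l dB dv). pose proof (Rmin_r dB dv). pose proof (Rmin_l d1 d3). pose proof (Rmin_r d1 d3).
      lra. }
    assert (Htl : RInt fJ p q <= RInt (fun r => D r / (m r + v t)) p q + eps * (q - p)).
    { apply Tail; auto. intros r Hr. destruct (Hin r Hr) as [H1 [H2 _]]. split.
      apply HBnd; auto. left. apply Hv1; auto. }
    assert (HDp : forall r, p <= r <= q -> 0 < D r).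
    { intros r Hr. destruct (Hin r Hr) as [_ [_ [H3 _]]]. destruct (Rabs_def2 _ _ (HD1 r H3)) as [? ?]. lra. }
    assert (Hme : forall r, p <= r <= q -> m r < e t).
    { intros r Hr. destruct (Hin r Hr) as [_ [_ [_ H4]]]. destruct (Rabs_def2 _ _ (Hm3 r H4)) as [? ?]. lra. }
    assert (Hmono : m p <= m q).
    { assert (0 <= RInt D p q).
      { apply RInt_ge_0. lra. apply HexD; lra. intros r Hr. specialize (HDp r ltac:(lra)). lra. }
      rewrite Hftcm in H by lra. lra. }
    assert (HU : Uf h a (m p) + Lw (v t) (m p) (m q) <= Uf h a (m q)).
    { apply Uf_A; auto. apply Hma; lra. apply Hh4; auto. apply Hme; lra. }
    rewrite (Hftc (v t) p q) in Htl by lra. unfold Lw in HU. lra.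
Qed.
Lemma exint (D m V : R -> R) p q : p <= q ->
  (forall z, p <= z <= q -> continuous D z /\ continuous m z /\ continuous V z /\ 0 < m z + V z) ->
  ex_RInt (fun r => D r / (m r + V r)) p q.
Proof.
  intros Hpq H. apply (ex_RInt_continuous (V:=R_CompleteNormedModule)).
  rewrite Rmin_left, Rmax_right by lra. intros z Hz. destruct (H z Hz) as [H1 [H2 [H3 H4]]].
  apply cont_div; auto. apply cont_plus; auto. lra.
Qed.

Lemma core T (m D v e : R -> R) a K :
  0 <= T -> 0 < a ->
  (forall t, 0 <= t <= T -> a <= m t) ->
  (forall t, 0 <= t <= T -> is_derive m t (D t)) ->
  (forall t, 0 <= t <= T -> continuous D t) ->
  (forall t, 0 <= t <= T -> continuous v t) ->
  (forall t, 0 <= t <= T -> 0 <= v t <= K) ->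
  (forall t, 0 <= t <= T -> 0 < D t -> m t < e t) ->
  (forall t, 0 <= t <= T -> D t < 0 -> e t < m t) ->
  (forall s t, 0 <= s <= T -> 0 <= t <= T -> e s < e t -> v s <= v t) ->
  m T = m 0 ->
  RInt (fun t => D t / (m t + v t)) 0 T <= 0.
Proof.
  intros HT Ha Hma Hd HDc Hvc Hv Hpos Hneg Hco Hcyc.
  set (fJ := fun t => D t / (m t + v t)).
  assert (Hmc : forall r, 0 <= r <= T -> continuous m r).
  { intros r Hr. apply (ex_derive_continuous (K:=R_AbsRing) (V:=R_NormedModule) m r). exists (D r). auto. }
  assert (HexJ : forall p q, 0 <= p -> p <= q -> q <= T -> ex_RInt fJ p q).
  { intros p q Hp Hpq Hq. apply exint; auto. intros z Hz. specialize (Hma z ltac:(lra)).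
    specialize (Hv z ltac:(lra)). repeat split; auto; try (apply HDc || apply Hmc || apply Hvc); lra. }
  set (G := fun t => Uf (Hf T v e) a (m t) - RInt fJ 0 t).
  assert (Hall : forall eps, 0 < eps -> - eps * T <= G T - G 0).
  { intros eps He. apply cont_ind; auto. intros t Ht.
    destruct (local_step T m D v e a K HT Ha Hma Hd HDc Hvc Hv Hpos Hneg Hco eps He t Ht) as [d [Hd0 Hl]].
    exists d. split; auto. intros p q Hp Hpq Hq Hpt Hqt.
    specialize (Hl p q Hp Hpq Hq Hpt Hqt).
    assert (E : RInt fJ 0 p + RInt fJ p q = RInt fJ 0 q).
    { apply (RInt_Chasles fJ 0 p q). apply HexJ; lra. apply HexJ; lra. }
    unfold G. fold fJ in Hl. lra. }
  assert (HG : G T - G 0 = - RInt fJ 0 T).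
  { unfold G. rewrite Hcyc. rewrite RInt_point. unfold zero; simpl. ring. }
  destruct (Rle_dec (RInt fJ 0 T) 0) as [Hle|Hgt]. exact Hle.
  exfalso. destruct (Req_dec T 0) as [HT0|HT0].
  - rewrite HT0, RInt_point in Hgt. apply Hgt. unfold zero; simpl. lra.
  - assert (0 < T) by lra.
    specialize (Hall (RInt fJ 0 T / (2 * T)) ltac:(apply Rdiv_lt_0_compat; lra)).
    rewrite HG in Hall.
    assert (RInt fJ 0 T / (2 * T) * T = RInt fJ 0 T / 2) by (field; lra).
    lra.
Qed.
Theorem mainTheorem1
  (sR2 : R) (sigma2 meq : R -> R) (g : R -> R -> R)
  (mu m : R -> R) (T : R)
  (HsR2 : 0 < sR2)
  (Hsig_nonneg : forall x, 0 <= sigma2 x)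
  (Hsig_cont : forall x, continuous sigma2 x)
  (Hsig_mono : forall x y, x <= y -> sigma2 x <= sigma2 y)
  (Hmeq_pos : forall x, 0 < meq x)
  (Hmeq_cont : forall x, continuous meq x)
  (Hmeq_mono : forall x y, x <= y -> meq x <= meq y)
  (Hg_sign : tracks_monotonically g)
  (Hg_cont : forall x y, 0 < x -> 0 < y ->
      continuous (fun p : R * R => g (fst p) (snd p)) (x, y))
  (HT : 0 <= T)
  (Hmu_cont : forall t, 0 <= t <= T -> continuous mu t)
  (Hm_pos : forall t, 0 <= t <= T -> 0 < m t)
  (Hode : forall t, 0 <= t <= T -> is_derive m t (g (m t) (meq (mu t))))
  (Hcyc_mu : mu T = mu 0)
  (Hcyc_m : m T = m 0) :
  0 <= RInt (fun t => info_coef sR2 sigma2 (mu t) (m t) * Derive m t) 0 T.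
Proof.
  set (D := fun t => g (m t) (meq (mu t))).
  set (v := fun t => sigma2 (mu t) / sR2).
  set (e := fun t => meq (mu t)).
  assert (Hmc : forall r, 0 <= r <= T -> continuous m r).
  { intros r Hr. apply (ex_derive_continuous (K:=R_AbsRing) (V:=R_NormedModule) m r). exists (D r). apply Hode; auto. }
  destruct (continuity_ab_min m 0 T HT) as [mx [Hmx1 Hmx2]].
  { intros c Hc. apply continuity_pt_filterlim. apply Hmc; auto. }
  destruct (continuity_ab_maj mu 0 T HT) as [Mx [HMx1 HMx2]].
  { intros c Hc. apply continuity_pt_filterlim. apply Hmu_cont; auto. }
  set (a := m mx). set (K := sigma2 (mu Mx) / sR2).
  assert (Ha : 0 < a) by (apply Hm_pos; auto).
  assert (Hec : forall t, 0 <= t <= T -> continuous e t).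
  { intros t Ht. apply (continuous_comp mu meq t); auto. }
  assert (HDc : forall t, 0 <= t <= T -> continuous D t).
  { intros t Ht. unfold D. apply (continuous_comp_2 m (fun t => meq (mu t)) g t).
    apply Hmc; auto. apply Hec; auto. apply Hg_cont. apply Hm_pos; auto. apply Hmeq_pos. }
  assert (Hvc : forall t, 0 <= t <= T -> continuous v t).
  { intros t Ht. unfold v. apply (cont_div (fun t => sigma2 (mu t)) (fun _ => sR2)).
    apply (continuous_comp mu sigma2 t); auto. apply continuous_const. lra. }
  assert (Hv : forall t, 0 <= t <= T -> 0 <= v t <= K).
  { intros t Ht. unfold v, K. split.
    - apply Rdiv_le_0_compat; auto.
    - unfold Rdiv. apply Rmult_le_compat_r. left; apply Rinv_0_lt_compat; auto.
      apply Hsig_mono. apply HMx1; auto. }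
  assert (Hsg : forall t, 0 <= t <= T -> (0 < D t -> m t < e t) /\ (D t < 0 -> e t < m t)).
  { intros t Ht. destruct (Hg_sign (m t) (meq (mu t)) (Hm_pos t Ht) (Hmeq_pos _)) as [_ [H1 H2]].
    unfold D, e. split; intros; [apply H1 | apply H2]; auto. }
  assert (Hco : forall s t, 0 <= s <= T -> 0 <= t <= T -> e s < e t -> v s <= v t).
  { intros s t Hs Ht Hst. unfold e, v in *. destruct (Rle_dec (mu s) (mu t)) as [Hle|Hlt].
    - unfold Rdiv. apply Rmult_le_compat_r. left; apply Rinv_0_lt_compat; auto. apply Hsig_mono; auto.
    - exfalso. assert (meq (mu t) <= meq (mu s)) by (apply Hmeq_mono; lra). lra. }
  assert (Hcore := core T m D v e a K HT Ha (fun t Ht => Hmx1 t Ht) Hode HDc Hvc Hv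
                     (fun t Ht => proj1 (Hsg t Ht)) (fun t Ht => proj2 (Hsg t Ht)) Hco Hcyc_m).
  assert (Hex1 : ex_RInt (fun r => D r / (m r + (fun _ => 0) r)) 0 T).
  { apply exint; auto. intros z Hz. repeat split; auto. apply continuous_const. simpl.
    specialize (Hm_pos z Hz). lra. }
  assert (Hex2 : ex_RInt (fun r => D r / (m r + v r)) 0 T).
  { apply exint; auto. intros z Hz. repeat split; auto. specialize (Hm_pos z Hz). specialize (Hv z Hz). lra. }
  assert (Hftc0 : RInt (fun r => D r / (m r + 0)) 0 T = ln (m T + 0) - ln (m 0 + 0)).
  { apply ftc_ln; [lra | lra | intros r Hr; apply Hode; lra | intros r Hr; apply HDc; lra | intros r Hr; apply Hm_pos; lra]. }
  rewrite (RInt_ext _ (fun t => /2 * (D t / (m t + 0) - D t / (m t + v t)))).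
  2: { intros x Hx. rewrite Rmin_left, Rmax_right in Hx by lra.
       assert (Hx' : 0 <= x <= T) by lra.
       change (@eq R (info_coef sR2 sigma2 (mu x) (m x) * Derive m x) (/ 2 * (D x / (m x + 0) - D x / (m x + v x)))).
       rewrite (is_derive_unique m x (D x) (Hode x Hx')).
       specialize (Hm_pos x Hx'). specialize (Hsig_nonneg (mu x)).
       unfold info_coef, v. field. repeat split; try lra.
       assert (0 < m x * sR2) by (apply Rmult_lt_0_compat; lra). lra. }
  assert (Hexm : ex_RInt (fun t => D t / (m t + 0) - D t / (m t + v t)) 0 T).
  { apply (ex_RInt_minus (fun r => D r / (m r + 0)) (fun r => D r / (m r + v r))); auto. }
  assert (E1 : RInt (fun t => / 2 * (D t / (m t + 0) - D t / (m t + v t))) 0 T =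
               / 2 * RInt (fun t => D t / (m t + 0) - D t / (m t + v t)) 0 T).
  { apply (RInt_scal (fun t => D t / (m t + 0) - D t / (m t + v t)) 0 T (/2)). exact Hexm. }
  assert (E2 : RInt (fun t => D t / (m t + 0) - D t / (m t + v t)) 0 T =
               RInt (fun r => D r / (m r + 0)) 0 T - RInt (fun r => D r / (m r + v r)) 0 T).
  { apply (RInt_minus (fun r => D r / (m r + 0)) (fun r => D r / (m r + v r))); auto. }
  rewrite E1, E2, Hftc0, Hcyc_m.
  fold v in Hcore. lra.
Qed.
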